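(* Let $G$ be a connected graph that admits a distinguishing edge coloring. Then $\theta'(G)=2$ if and only if $G\cong K_{1,2}$.
   Context: All graphs are finite and simple. An automorphism acts on edges by $\alpha(uv)=\alpha(u)\alpha(v)$. An edge coloring with $k$ colors is a surjective map $c:E(G)\to\{1,\dots,k\}$. It is distinguishing if only the identity automorphism preserves all edge colors. $\theta'(G)$ is the least integer $k$ such that every edge coloring of $G$ using exactly $k$ colors is distinguishing. *)

(* Defs.v *)
From mathcomp Require Import all_boot all_fingroup.
Set Implicit Arguments. Unset Strict Implicit. Unset Printing Implicit Defensive.

(* A finite simple graph: vertex type T : finType, adjacency e : rel T,
   assumed symmetric and irreflexive (as hypotheses of the theorem). *)

Definition edges (T : finType) (e : rel T) : {set {set T}} :=
  [set f : {set T} | [exists x, exists y, e x y && (f == [set x; y])]].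

Definition is_aut (T : finType) (e : rel T) (s : {perm T}) : Prop :=
  forall x y, e (s x) (s y) = e x y.

Definition connected_graph (T : finType) (e : rel T) : Prop :=
  (exists x : T, True) /\ forall x y : T, connect e x y.

Definition uses_exactly (T : finType) (e : rel T) (k : nat)
  (c : {set T} -> 'I_k) : Prop :=
  forall i : 'I_k, exists2 f, f \in edges e & c f = i.

Definition distinguishing (T : finType) (e : rel T) (k : nat)
  (c : {set T} -> 'I_k) : Prop :=
  forall s : {perm T}, is_aut e s ->
    (forall f, f \in edges e -> c (s @: f) = c f) -> s = 1%g.

Definition has_dist_edge_coloring (T : finType) (e : rel T) : Prop :=
  exists k (c : {set T} -> 'I_k), uses_exactly e c /\ distinguishing e c.

Definition all_dist (T : finType) (e : rel T) (k : nat) : Prop :=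
  forall c : {set T} -> 'I_k, uses_exactly e c -> distinguishing e c.

Definition theta'_eq (T : finType) (e : rel T) (k : nat) : Prop :=
  0 < k /\ all_dist e k /\ forall j, 0 < j < k -> ~ all_dist e j.

Definition K12 : rel 'I_3 := fun i j => (i != j) && ((val i == 0) || (val j == 0)).

Definition isomorphic_K12 (T : finType) (e : rel T) : Prop :=
  exists f : T -> 'I_3, bijective f /\ forall x y, e x y = K12 (f x) (f y).

(* Main.v *)
Require Import Defs.
From mathcomp Require Import all_boot all_fingroup.
From Stdlib Require Import Classical.

Set Implicit Arguments. Unset Strict Implicit. Unset Printing Implicit Defensive.

Section Aux.
Variables (T : finType) (e : rel T).
Hypothesis e_sym : symmetric e.
Hypothesis e_irr : irreflexive e.

Lemma imset2P (s : {perm T}) x y : s @: [set x; y] = [set s x; s y].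
Proof. by rewrite imsetU1 imset_set1. Qed.

Lemma edgeE f : f \in edges e -> exists x y, e x y /\ f = [set x; y].
Proof. by rewrite inE => /existsP[x /existsP[y /andP[H /eqP->]]]; exists x, y. Qed.

Lemma mkedge x y : e x y -> [set x; y] \in edges e.
Proof. by move=> H; rewrite inE; apply/existsP; exists x; apply/existsP; exists y; rewrite H eqxx. Qed.

Lemma aut_edges s f : is_aut e s -> f \in edges e -> s @: f \in edges e.
Proof. by move=> Hs /edgeE[x [y [H ->]]]; rewrite imset2P; apply: mkedge; rewrite Hs. Qed.

Lemma autM s t : is_aut e s -> is_aut e t -> is_aut e (s * t)%g.
Proof. by move=> Hs Ht x y; rewrite !permM Ht Hs. Qed.

Lemma autV s : is_aut e s -> is_aut e s^-1%g.
Proof. by move=> Hs x y; rewrite -Hs !permKV. Qed.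

Lemma aut1 : is_aut e 1%g.
Proof. by move=> x y; rewrite !perm1. Qed.

Lemma autX s i : is_aut e s -> is_aut e (s ^+ i)%g.
Proof. move=> Hs; elim: i => [|i IH]; first by rewrite expg0; apply: aut1.
by rewrite expgS; apply: autM. Qed.

Lemma autC s t : is_aut e s -> t \in <[s]>%g -> is_aut e t.
Proof. by move=> Hs /cycleP[i ->]; apply: autX. Qed.

Lemma connect_nb : connected_graph e -> forall x y, x != y -> exists z, e x z.
Proof.
move=> [_ Hc] x y Hxy; have /connectP[p Hp Hl] := Hc x y.
case: p Hp Hl => [|z p] /=; first by move=> _ Hy; rewrite Hy eqxx in Hxy.
by move=> /andP[H _] _; exists z.
Qed.

Lemma Pprin t (S : {set {set T}}) f1 f2 : all_dist e 2 -> is_aut e t -> t != 1%g ->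
  (forall f, f \in edges e -> (t @: f \in S) = (f \in S)) ->
  f1 \in edges e -> f2 \in edges e -> f1 \in S -> f2 \notin S -> False.
Proof.
move=> H2 Ht nt Hst E1 E2 S1 S2.
pose c := fun f : {set T} => if f \in S then (ord_max : 'I_2) else ord0.
have Hu : uses_exactly e c.
  case=> [[|[|//]]] Hi.
  - by exists f2 => //; rewrite /c (negbTE S2); apply: val_inj.
  - by exists f1 => //; rewrite /c S1; apply: val_inj.
have := H2 c Hu t Ht.
by move=> /(_ _) H; rewrite H ?eqxx in nt => // f Hf; rewrite /c Hst.
Qed.

Lemma two_edges s f0 : has_dist_edge_coloring e -> is_aut e s -> s != 1%g ->
  f0 \in edges e -> exists2 f, f \in edges e & f != f0.
Proof.
move=> [k [c [_ Hd]]] Hs ns E0.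
apply: NNPP => Hn.
have Hall : forall f, f \in edges e -> f = f0.
  move=> f Hf; apply: NNPP => Hne; apply: Hn; exists f => //; exact/eqP.
have H := Hd s Hs; suff: s = 1%g by move=> H1; rewrite H1 eqxx in ns.
apply: H => f Hf; by rewrite (Hall _ (aut_edges Hs Hf)) (Hall _ Hf).
Qed.


Lemma set2_in_l (x y z w : T) : [set x; y] = [set z; w] -> x = z \/ x = w.
Proof. by move=> H; have := set21 x y; rewrite H => /set2P. Qed.

Lemma caseA t v : connected_graph e -> has_dist_edge_coloring e -> all_dist e 2 ->
  is_aut e t -> t != 1%g -> t v = v -> isomorphic_K12 e.
Proof.
move=> Hc Hd H2 Ht nt Htv.
have [x Hx] : exists x, t x != x.
  apply: NNPP => Hn; move/eqP: nt; apply; apply/permP => x; rewrite perm1.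
  by apply: NNPP => Hne; apply: Hn; exists x; apply/eqP.
have [w Hw] : exists w, v != w.
  case: (eqVneq v x) => [Evx|]; last by exists x.
  by exists (t x); rewrite Evx eq_sym.
have [u Hvu] := connect_nb Hc Hw.
have E0 := mkedge Hvu.
have Hstar : forall x y, e x y -> x = v \/ y = v.
  move=> a b Hab; apply: NNPP => Hn.
  apply: (Pprin (S:=[set f : {set T} | v \in f]) (f1:=[set v; u]) (f2:=[set a; b]) H2 Ht nt) => //.
  - by move=> f _; rewrite !inE -{1}Htv mem_imset //; apply: perm_inj.
  - exact: mkedge.
  - by rewrite inE set21.
  - rewrite inE; apply/set2P => -[] /esym ?; apply: Hn; tauto.
have uv : (u == v) = false by apply/eqP => Euv; rewrite Euv e_irr in Hvu.
have [f Ef Hf] := two_edges Hd Ht nt E0.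
have [l2 [Hvl2 ul2]] : exists l2, e v l2 /\ (u == l2) = false.
  have [a [b [Hab Ef']]] := edgeE Ef.
  case: (Hstar _ _ Hab) => Ev.
  - exists b; rewrite -Ev; split=> //; apply/eqP => Eub; move: Hf.
    by rewrite Ef' Ev -Eub eqxx.
  - exists a; rewrite -Ev e_sym; split=> //; apply/eqP => Eub; move: Hf.
    by rewrite Ef' Ev -Eub setUC eqxx.
have l2v : (l2 == v) = false by apply/eqP => E; rewrite E e_irr in Hvl2.
have Hchar : forall a b, e a b = ((a == v) && e v b) || ((b == v) && e v a).
  move=> a b; case Hab: (e a b).
  - by case: (Hstar _ _ Hab) => Ev; rewrite Ev in Hab *; rewrite eqxx ?Hab //= e_sym Hab orbT.
  - case: (eqVneq a v) => [Eav|Hav]; first by rewrite Eav in Hab *; rewrite ?eqxx Hab /= e_irr andbF.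
    case: (eqVneq b v) => [Ebv|Hbv] //=; by rewrite Ebv in Hab *; rewrite e_sym Hab.
have Hnb : forall l, e v l -> l = u \/ l = l2.
  move=> l Hl; apply: NNPP => Hn.
  pose tp := tperm u l2.
  have tpv : tp v = v by rewrite tpermD // ?uv ?l2v.
  have tpl : tp l = l by rewrite tpermD //; apply/eqP => E; apply: Hn; rewrite E; tauto.
  have Htp : is_aut e tp.
    move=> a b; rewrite (Hchar (tp a)) (Hchar a).
    have tpe : forall c, (tp c == v) = (c == v) by move=> c; rewrite -{1}tpv (inj_eq perm_inj).
    have Hvtp : forall c, e v (tp c) = e v c.
      by move=> c; rewrite /tp; case: tpermP => [->|->|] //; rewrite Hvu Hvl2.
    by rewrite !tpe !Hvtp.
  have ntp : tp != 1%g.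
    by apply/eqP => E; move: (tpermL u l2); rewrite -/tp E perm1 => /eqP; rewrite ul2.
  apply: (Pprin (S:=[set [set v; l]]) (f1:=[set v; l]) (f2:=[set v; u]) H2 Htp ntp) => //.
  - have Etp : tp @: [set v; l] = [set v; l] by rewrite imset2P tpv tpl.
    move=> g _; rewrite !inE -{1}Etp.
    by rewrite (inj_eq (imset_inj perm_inj)).
  - exact: mkedge.
  - by rewrite inE.
  - rewrite inE; apply/eqP => E; have : u \in [set v; l] by rewrite -E set22.
    case/set2P=> E'; first by rewrite E' eqxx in uv.
    by apply: Hn; left.
have Hall : forall a, a = v \/ a = u \/ a = l2.
  move=> a; case: (eqVneq a v) => [|Hav]; first by left.
  have [z Hz] := connect_nb Hc Hav.
  case: (Hstar _ _ Hz) => Ez; first by rewrite Ez eqxx in Hav.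
  rewrite Ez e_sym in Hz; right; exact: Hnb.
have nul2 : e u l2 = false by rewrite Hchar uv l2v.
pose o0 := (@Ordinal 3 0 isT); pose o1 := (@Ordinal 3 1 isT); pose o2 := (@Ordinal 3 2 isT).
pose fv := fun a => if a == v then o0 else if a == u then o1 else o2.
pose gv := fun i : 'I_3 => if val i == 0 then v else if val i == 1 then u else l2.
have vu : (v == u) = false by rewrite eq_sym.
have vl2 : (v == l2) = false by rewrite eq_sym.
have l2u : (l2 == u) = false by rewrite eq_sym.
exists fv; split.
  exists gv.
  - move=> a; case: (Hall a) => [->|[->|->]]; by rewrite /fv /gv ?eqxx ?uv ?vu ?l2v ?l2u.
  - by case=> [[|[|[|//]]]] Hi; rewrite /fv /gv /= ?eqxx ?uv ?vu ?l2v ?l2u ?vl2 ?ul2 //;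
       apply: val_inj.
move=> a b; case: (Hall a) => [->|[->|->]]; case: (Hall b) => [->|[->|->]];
  rewrite /fv ?eqxx ?uv ?vu ?l2v ?l2u ?e_irr ?nul2 ?Hvu ?Hvl2 //;
  by rewrite ?(e_sym u) ?(e_sym l2) ?Hvu ?Hvl2 ?nul2 ?(e_sym l2 u) ?nul2.
Qed.


Lemma comm_cyc (s t u : {perm T}) : t \in <[s]>%g -> u \in <[s]>%g -> (t * u = u * t)%g.
Proof. by move=> /cycleP[i ->] /cycleP[j ->]; apply: commuteX2. Qed.

Lemma caseB s : connected_graph e -> has_dist_edge_coloring e -> all_dist e 2 ->
  is_aut e s -> s != 1%g ->
  (forall (t : {perm T}) x, is_aut e t -> t != 1%g -> t x != x) -> False.
Proof.
move=> Hc Hd H2 Hs ns H.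
have [x Hx] : exists x, s x != x.
  apply: NNPP => Hn; move/eqP: ns; apply; apply/permP => x; rewrite perm1.
  by apply: NNPP => Hne; apply: Hn; exists x; apply/eqP.
have [b Hab] := connect_nb Hc Hx.
set a := s x in Hab.
have U : forall (t u : {perm T}) z, t \in <[s]>%g -> u \in <[s]>%g -> t z = u z -> t = u.
  move=> t u z Ht Hu Etu; apply/eqP; rewrite eq_mulgV1.
  case: (eqVneq (t * u^-1)%g 1%g) => // Hn.
  have : (t * u^-1)%g z != z.
    by apply: H => //; apply: autM; [apply: autC Hs Ht | apply: autV; apply: autC Hs Hu].
  by rewrite permM Etu permK eqxx.
pose S3 := [set f : {set T} | [exists t in <[s]>%g, f == t @: [set a; b]]].
have S3cl : forall (u : {perm T}) f, u \in <[s]>%g -> f \in S3 -> u @: f \in S3.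
  move=> u f Hu; rewrite !inE => /existsP[t /andP[Ht /eqP ->]].
  apply/existsP; exists (t * u)%g; rewrite groupM //=.
  by rewrite -imset_comp; apply/eqP/eq_imset => z; rewrite permM.
have Hsc : s \in <[s]>%g := cycle_id s.
have Hall3 : forall f, f \in edges e -> f \in S3.
  move=> f Hf; apply: NNPP => Hn.
  apply: (Pprin (S:=S3) (f1:=[set a; b]) (f2:=f) H2 Hs ns) => //; last first.
  - by apply/negP.
  - rewrite inE; apply/existsP; exists 1%g; rewrite group1 /=.
    by apply/eqP; rewrite -[LHS]imset_id; apply: eq_imset => z; rewrite perm1.
  - exact: mkedge.
  - move=> g _; apply/idP/idP; last exact: S3cl.
    move=> Hg; have := S3cl _ _ (groupVr Hsc) Hg.
    by rewrite -imset_comp (eq_imset (g:=id)) ?imset_id // => z /=; rewrite permK.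
have HE : forall y z, e y z -> exists2 t, t \in <[s]>%g & [set y; z] = [set t a; t b].
  move=> y z Hyz; have := Hall3 _ (mkedge Hyz); rewrite inE => /existsP[t /andP[Ht /eqP Et]].
  by exists t => //; rewrite Et imset2P.
have [f Ef Hf] := two_edges Hd Hs ns (mkedge Hab).
have [y [z [Hyz Efyz]]] := edgeE Ef.
case: (classic (exists2 t0, t0 \in <[s]>%g & b = t0 a)) => [[t0 Ht0 Eb]|NB].
-
  pose A := [set (t : {perm T}) a | t in <[s]>%g].
  have Acl : forall p q, e p q -> p \in A -> q \in A.
    move=> p q Hpq /imsetP[t Ht Ep]; have [t' Ht' E'] := HE _ _ Hpq.
    have : q \in [set t' a; t' b] by rewrite -E' set22.
    case/set2P => ->; first by apply: imset_f.
    by rewrite Eb -permM; apply: imset_f; rewrite groupM.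
  have Aall : forall w, w \in A.
    move=> w; have aA : a \in A by apply/imsetP; exists 1%g; rewrite ?group1 ?perm1.
    have Hcl : closed e (mem A).
      by move=> p q Hpq; apply/idP/idP; [apply: Acl | apply: Acl; rewrite e_sym].
    by rewrite -(closed_connect Hcl (proj2 Hc a w)).
  pose g := fun w => odflt 1%g [pick t in <[s]>%g | t a == w].
  have gP : forall w, g w \in <[s]>%g /\ g w a = w.
    move=> w; rewrite /g; case: pickP => [t /andP[Ht /eqP Et]|Hn] //=.
    have /imsetP[t Ht Et] := Aall w; have := Hn t; rewrite Ht Et eqxx //.
  have gE : forall t, t \in <[s]>%g -> g (t a) = t.
    by move=> t Ht; have [g1 g2] := gP (t a); apply: U g2.
  pose r := fun w => (g w)^-1%g a.
  have rinj : injective r.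
    move=> p q Epq; have [gp1 gp2] := gP p; have [gq1 gq2] := gP q.
    have : ((g p)^-1)%g = ((g q)^-1)%g by apply: U Epq; rewrite groupV.
    by move/invg_inj => Eg; rewrite -gp2 -gq2 Eg.
  pose R := perm rinj.
  have RE : forall w, R w = r w by move=> w; rewrite permE.
  have HR : is_aut e R.
    move=> p q; rewrite !RE /r.
    have [gp1 gp2] := gP p; have [gq1 gq2] := gP q.
    set gp := g p in gp1 gp2 *; set gq := g q in gq1 gq2 *.
    have Agp := autC Hs gp1; have Agq := autC Hs gq1.
    rewrite -(Agp (gp^-1 a)%g) permKV -[in RHS]gp2 -[in RHS]gq2.
    rewrite -(autV Agq (gp a)) permK -!permM.
    rewrite (comm_cyc gp1 (groupVr gq1)) e_sym //.
  have Ra : R a = a.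
    rewrite RE /r; have := gE 1%g (group1 _); rewrite perm1 => ->.
    by rewrite invg1 perm1.
  have R1 : R = 1%g.
    case: (eqVneq R 1%g) => // nR; have := H R a HR nR; by rewrite Ra eqxx.
  have ss : (s * s)%g = 1%g.
    case: (eqVneq (s * s)%g 1%g) => // nss.
    have := H _ a (autM Hs Hs) nss; rewrite permM.
    have : R (s a) = s a by rewrite R1 perm1.
    by rewrite RE /r gE // => <-; rewrite permKV eqxx.
  have cyc2 : forall t, t \in <[s]>%g -> t = 1%g \/ t = s.
    move=> t /cycleP[i ->]; elim: i => [|i [IH|IH]]; first by left; rewrite expg0.
    + by right; rewrite expgS IH mulg1.
    + by left; rewrite expgS IH.
  have Eb' : b = s a.
    case: (cyc2 _ Ht0) => Et0; rewrite Et0 in Eb => //.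
    by rewrite Eb perm1 e_irr in Hab.
  have sb : s b = a by rewrite Eb' -permM ss perm1.
  have [t Ht Et] := HE _ _ Hyz.
  move: Hf; rewrite Efyz Et; case: (cyc2 _ Ht) => ->; first by rewrite !perm1 eqxx.
  by rewrite sb -Eb' setUC eqxx.
-
  have nA : forall t, t \in <[s]>%g -> b != t a.
    by move=> t Ht; apply/eqP => E; apply: NB; exists t.
  have t1 : forall t w, t \in <[s]>%g -> t w = w -> t = 1%g.
    by move=> t w Ht Etw; apply: (U _ _ w) => //; rewrite perm1.
  have Na : forall w, e a w -> w = b.
    move=> w Hw; have [t Ht Et] := HE _ _ Hw.
    have : a \in [set t a; t b] by rewrite -Et set21.
    case/set2P => Ea.
    + have Et1 := t1 _ _ Ht (esym Ea); rewrite Et1 !perm1 in Et.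
      have : w \in [set a; b] by rewrite -Et set22.
      by case/set2P => // Ew; rewrite Ew e_irr in Hw.
    + have : b = (t^-1)%g a by rewrite Ea permK.
      by move=> E; have := nA _ (groupVr Ht); rewrite -E eqxx.
  have Nb : forall w, e b w -> w = a.
    move=> w Hw; have [t Ht Et] := HE _ _ Hw.
    have : b \in [set t a; t b] by rewrite -Et set21.
    case/set2P => Ea.
    + by have := nA _ Ht; rewrite -Ea eqxx.
    + have Et1 := t1 _ _ Ht (esym Ea); rewrite Et1 !perm1 in Et.
      have : w \in [set a; b] by rewrite -Et set22.
      by case/set2P => // Ew; rewrite Ew e_irr in Hw.
  have Hcl : closed e (mem [set a; b]).
    move=> p q Hpq; apply/idP/idP => /set2P [] Ep; subst.
    + by rewrite (Na _ Hpq) set22.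
    + by rewrite (Nb _ Hpq) set21.
    + by rewrite e_sym in Hpq; rewrite (Na _ Hpq) set22.
    + by rewrite e_sym in Hpq; rewrite (Nb _ Hpq) set21.
  have Vall : forall w, w \in [set a; b].
    by move=> w; rewrite -(closed_connect Hcl (proj2 Hc a w)) set21.
  move: Hf; rewrite Efyz.
  have := Vall y; have := Vall z.
  case/set2P => Ez; case/set2P => Ey; subst y z; rewrite ?eqxx ?e_irr // in Hyz *.
  by rewrite setUC eqxx.
Qed.

Lemma revdir : isomorphic_K12 e -> theta'_eq e 2.
Proof.
move=> [fv [[gv fK gK] Hf]].
pose o0 := (@Ordinal 3 0 isT); pose o1 := (@Ordinal 3 1 isT); pose o2 := (@Ordinal 3 2 isT).
pose v := gv o0; pose u := gv o1; pose w := gv o2.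
have Hall : forall x, x = v \/ x = u \/ x = w.
  move=> x; rewrite /v /u /w -(fK x); case: (fv x) => [[|[|[|//]]]] Hi;
  [left|right;left|right;right]; by congr gv; apply: val_inj.
have Hg : forall i j, e (gv i) (gv j) = K12 i j by move=> i j; rewrite Hf !gK.
have gI : injective gv := can_inj gK.
have evu : e v u by rewrite Hg.
have evw : e v w by rewrite Hg.
have euv : e u v by rewrite Hg.
have ewv : e w v by rewrite Hg.
have euw : e u w = false by rewrite Hg.
have ewu : e w u = false by rewrite Hg.
have dvu : (v == u) = false by rewrite (inj_eq gI).
have duv : (u == v) = false by rewrite (inj_eq gI).
have dvw : (v == w) = false by rewrite (inj_eq gI).
have dwv : (w == v) = false by rewrite (inj_eq gI).
have duw : (u == w) = false by rewrite (inj_eq gI).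
have dwu : (w == u) = false by rewrite (inj_eq gI).
pose F1 := [set v; u]; pose F2 := [set v; w].
have Hedges : forall f, f \in edges e -> f = F1 \/ f = F2.
  move=> f Ef; have [p [q [Hpq Efpq]]] := edgeE Ef; rewrite Efpq.
  case: (Hall p) => [Ex|[Ex|Ex]]; case: (Hall q) => [Ey|[Ey|Ey]]; rewrite Ex Ey in Hpq *;
    rewrite ?e_irr ?euw ?ewu // in Hpq; rewrite /F1 /F2 ?(setUC [set u]) ?(setUC [set w]); tauto.
split => //; split.
- move=> c Hu s Hs Hpres.
  have E1 : F1 \in edges e by apply: mkedge.
  have E2 : F2 \in edges e by apply: mkedge.
  have c12 : c F1 != c F2.
    apply/eqP => Ec.
    have [f0 Ef0 C0] := Hu ord0; have [f1 Ef1 C1] := Hu ord_max.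
    have : c f0 = c f1.
      by case: (Hedges _ Ef0) => ->; case: (Hedges _ Ef1) => ->.
    by rewrite C0 C1 => /(congr1 val).
  have sF : forall F, F \in edges e -> s @: F = F.
    move=> F EF; have EsF := aut_edges Hs EF.
    have := Hpres _ EF.
    case: (Hedges _ EF) => EF'; case: (Hedges _ EsF) => EsF'; rewrite EsF' EF' // => Ec.
    + by rewrite Ec eqxx in c12.
    + by rewrite Ec eqxx in c12.
  have sv : s v = v.
    have h1 : s v \in F1 by rewrite -(sF _ E1) imset_f // set21.
    have h2 : s v \in F2 by rewrite -(sF _ E2) imset_f // set21.
    move: h1 h2; rewrite !inE => /orP[/eqP->|/eqP->] // /orP[/eqP E|/eqP E] //.
    by move: duw; rewrite E eqxx.
  have su : s u = u.
    have h1 : s u \in F1 by rewrite -(sF _ E1) imset_f // set22.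
    move: h1; rewrite !inE => /orP[/eqP E|/eqP->] //.
    by move: duv; rewrite -sv in E; rewrite (perm_inj E) eqxx.
  have sw : s w = w.
    have h1 : s w \in F2 by rewrite -(sF _ E2) imset_f // set22.
    move: h1; rewrite !inE => /orP[/eqP E|/eqP->] //.
    by move: dwv; rewrite -sv in E; rewrite (perm_inj E) eqxx.
  by apply/permP => x; rewrite perm1; case: (Hall x) => [->|[->|->]].
- case=> [|[|//]] // _ H1.
  pose c := fun _ : {set T} => (ord0 : 'I_1).
  have Hu : uses_exactly e c.
    by move=> i; exists F1; [apply: mkedge | rewrite /c; apply: val_inj; case: i => [[|]]].
  pose tp := tperm u w.
  have tpv : tp v = v by rewrite /tp tpermD // ?duv ?dwv.
  have tpu : tp u = w by rewrite /tp tpermL.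
  have tpw : tp w = u by rewrite /tp tpermR.
  have Htp : is_aut e tp.
    move=> x y.
    by case: (Hall x) => [->|[->|->]]; case: (Hall y) => [->|[->|->]];
      rewrite ?tpv ?tpu ?tpw ?e_irr ?evu ?evw ?euv ?ewv ?euw ?ewu.
  have := H1 c Hu tp Htp (fun _ _ => erefl).
  by move=> E; move: (tpermL u w); rewrite -/tp E perm1 => /eqP; rewrite duw.
Qed.

End Aux.

Theorem mainTheorem3 (T : finType) (e : rel T)
  (e_sym : symmetric e) (e_irr : irreflexive e) :
  connected_graph e -> has_dist_edge_coloring e ->
  (theta'_eq e 2 <-> isomorphic_K12 e).
Proof.
move=> Hc Hd; split; last exact: revdir.
move=> [_ [H2 Hn1]].
have [s [Hs ns]] : exists s, is_aut e s /\ s != 1%g.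
  apply: NNPP => Hno; apply: (Hn1 1 isT) => c _ s Hs _.
  apply: NNPP => Hne; apply: Hno; exists s; split => //; exact/eqP.
case: (classic (exists t v, is_aut e t /\ t != 1%g /\ t v = v)) => [[t [v [Ht [nt Htv]]]]|Hno].
- exact: (caseA e_sym e_irr Hc Hd H2 Ht nt Htv).
- exfalso; apply: (caseB e_sym e_irr Hc Hd H2 Hs ns) => t x Ht nt.
  by apply/eqP => E; apply: Hno; exists t, x.
Qed.
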